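(* Let $V$ be an irreducible $\tau$-module with finite-dimensional weight spaces, and let $z_1,z_2$ be non-zero central operators on $V$ of the same degree $\underline m$. Then $z_1=cz_2$ for some constant $c\in\mathbb C$. In particular, in each degree the non-zero central operators span a space of dimension at most one.
   Context: Let $\mathring{\mathfrak g}$ be a finite-dimensional simple Lie algebra over $\mathbb C$ with Cartan subalgebra $\mathring{\mathfrak h}$ and a nondegenerate invariant symmetric bilinear form $(\cdot,\cdot)$. Fix $n\ge2$, $A=\mathbb C[t_1^{\pm1},\dots,t_n^{\pm1}]$, $t^{\underline m}=t_1^{m_1}\cdots t_n^{m_n}$. Let $\mathcal Z$ be spanned by symbols $t^{\underline m}K_i$ subject to $\sum_im_it^{\underline m}K_i=0$; $K_i=t^0K_i$; $d(t^{\underline r})t^{\underline s}=\sum_ir_it^{\underline r+\underline s}K_i$. The toroidal Lie algebra $\tau=\mathring{\mathfrak g}\otimes A\oplus\mathcal Z\oplus D$, $D=\mathrm{span}(d_1,\dots,d_n)$, has bracket $[X\otimes t^{\underline r},Y\otimes t^{\underline s}]=[X,Y]\otimes t^{\underline r+\underline s}+(X,Y)d(t^{\underline r})t^{\underline s}$, $\mathcal Z$ central in $\mathring{\mathfrak g}\otimes A\oplus\mathcal Z$, $[d_i,X\otimes t^{\underline r}]=r_iX\otimes t^{\underline r}$, $[d_i,t^{\underline m}K_j]=m_it^{\underline m}K_j$, $[d_i,d_j]=0$. Weight spaces are with respect to $\underline{\mathfrak h}=\mathring{\mathfrak h}\oplus\mathrm{span}(K_i)\oplus D$. A central operator of degree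 $\underline m$ on $V$ is a linear map $z:V\to V$ commuting with the action of $\mathring{\mathfrak g}\otimes A\oplus\mathcal Z$ and satisfying $d_iz-zd_i=m_iz$ for all $i$. *)

(* Defs.v *)
From mathcomp Require Import all_boot all_algebra.
From mathcomp Require Export complex reals.
Set Implicit Arguments. Unset Strict Implicit. Unset Printing Implicit Defensive.
Import GRing.Theory.
Local Open Scope ring_scope.

Section LieDefs.
Variable K : fieldType.

Variable g : vectType K.
Variable br : g -> g -> g.

Definition is_lie_bracket : Prop :=
  [/\ (forall (a : K) (x y z : g), br (a *: x + y) z = a *: br x z + br y z),
      (forall (a : K) (x y z : g), br z (a *: x + y) = a *: br z x + br z y),
      (forall x : g, br x x = 0) &
      (forall x y z : g, br x (br y z) + br y (br z x) + br z (br x y) = 0)].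

Definition lie_ideal (I : {vspace g}) : Prop :=
  forall x y : g, y \in I -> br x y \in I.

Definition simple_lie : Prop :=
  is_lie_bracket /\ (exists x y : g, br x y != 0) /\
  (forall I : {vspace g}, lie_ideal I -> I = 0%VS \/ I = fullv).

(* Cartan subalgebra: nilpotent self-normalizing subalgebra *)
Definition cartan_subalgebra (h : {vspace g}) : Prop :=
  [/\ (forall x y, x \in h -> y \in h -> br x y \in h),
      (exists N : nat, forall (hs : seq g) (x : g),
          size hs = N -> all (fun a => a \in h) hs -> x \in h ->
          foldr br x hs = 0) &
      (forall x : g, (forall y, y \in h -> br x y \in h) -> x \in h)].

Definition nondeg_invariant_form (form : g -> g -> K) : Prop :=
  [/\ (forall (a : K) (x y z : g), form (a *: x + y) z = a * form x z + form y z),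
      (forall x y, form x y = form y x),
      (forall x y z, form (br x y) z = form x (br y z)) &
      (forall x, (forall y, form x y = 0) -> x = 0)].

Variable n : nat.
Variable V : lmodType K.

Definition lin_op (f : V -> V) : Prop :=
  forall (a : K) (u v : V), f (a *: u + v) = a *: f u + f v.

(* rho X r   = action of X (x) t^r,
   kk m i    = action of t^m K_i,
   dd i      = action of d_i.
   Elements r of Z^n are row vectors 'rV[int]_n, with r_i = r ord0 i. *)
Definition is_tau_module
    (rho : g -> 'rV[int]_n -> V -> V) (kk : 'rV[int]_n -> 'I_n -> V -> V)
    (dd : 'I_n -> V -> V) (form : g -> g -> K) : Prop :=
  [/\
      (forall x r, lin_op (rho x r)) /\ (forall m i, lin_op (kk m i)) /\
      (forall i, lin_op (dd i)),
      (forall (a : K) (x y : g) (r : 'rV[int]_n) v, rho (a *: x + y) r v = a *: rho x r v + rho y r v),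
      (* defining relations of Z : sum_i m_i t^m K_i = 0 *)
      (forall (m : 'rV[int]_n) v, \sum_(i < n) ((m ord0 i)%:~R : K) *: kk m i v = 0),
      (forall x y (r s : 'rV[int]_n) v,
          rho x r (rho y s v) - rho y s (rho x r v) =
          rho (br x y) (r + s) v
          + form x y *: \sum_(i < n) ((r ord0 i)%:~R : K) *: kk (r + s) i v) &
      [/\
          (forall m i x r v, kk m i (rho x r v) = rho x r (kk m i v)),
          (forall m i m' j v, kk m i (kk m' j v) = kk m' j (kk m i v)),
          (forall i x (r : 'rV[int]_n) v, dd i (rho x r v) - rho x r (dd i v)
                            = ((r ord0 i)%:~R : K) *: rho x r v),
          (forall i (m : 'rV[int]_n) j v, dd i (kk m j v) - kk m j (dd i v)
                            = ((m ord0 i)%:~R : K) *: kk m j v) &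
          (forall i j v, dd i (dd j v) = dd j (dd i v))]].

Definition subspace (S : V -> Prop) : Prop :=
  S 0 /\ (forall (a : K) u v, S u -> S v -> S (a *: u + v)).

Definition tau_irreducible
    (rho : g -> 'rV[int]_n -> V -> V) (kk : 'rV[int]_n -> 'I_n -> V -> V)
    (dd : 'I_n -> V -> V) : Prop :=
  (exists v : V, v != 0) /\
  (forall S : V -> Prop, subspace S ->
     (forall x r v, S v -> S (rho x r v)) ->
     (forall m i v, S v -> S (kk m i v)) ->
     (forall i v, S v -> S (dd i v)) ->
     (forall v, S v -> v = 0) \/ (forall v, S v)).

(* weight spaces w.r.t.  h = hc (+) span(K_i) (+) D ; a weight is given by its
   values mu on hc, a on the K_i = t^0 K_i, and b on the d_i. *)
Definition weight_space (hc : {vspace g})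
    (rho : g -> 'rV[int]_n -> V -> V) (kk : 'rV[int]_n -> 'I_n -> V -> V)
    (dd : 'I_n -> V -> V) (mu : g -> K) (a b : 'I_n -> K) (v : V) : Prop :=
  (forall h, h \in hc -> rho h 0 v = mu h *: v) /\
  (forall i, kk 0 i v = a i *: v) /\ (forall i, dd i v = b i *: v).

Definition fin_dim (S : V -> Prop) : Prop :=
  exists s : seq V, forall v, S v <->
    exists c : 'I_(size s) -> K, v = \sum_(j < size s) c j *: s`_j.

Definition weight_module_fin (hc : {vspace g})
    (rho : g -> 'rV[int]_n -> V -> V) (kk : 'rV[int]_n -> 'I_n -> V -> V)
    (dd : 'I_n -> V -> V) : Prop :=
  (forall v : V, exists s : seq V, v = \sum_(w <- s) w /\
     forall w, w \in s -> exists mu a b, weight_space hc rho kk dd mu a b w) /\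
  (forall mu a b, fin_dim (weight_space hc rho kk dd mu a b)).

Definition central_operator
    (rho : g -> 'rV[int]_n -> V -> V) (kk : 'rV[int]_n -> 'I_n -> V -> V)
    (dd : 'I_n -> V -> V) (m : 'rV[int]_n) (z : V -> V) : Prop :=
  [/\ lin_op z,
      (forall x r v, z (rho x r v) = rho x r (z v)),
      (forall m' i v, z (kk m' i v) = kk m' i (z v)) &
      (forall i v, dd i (z v) - z (dd i v) = ((m ord0 i)%:~R : K) *: z v)].

End LieDefs.

(* Main.v *)
Require Import Defs.
From mathcomp Require Import all_boot all_algebra.
From mathcomp Require Import complex reals.
From mathcomp Require Import zify.
From Stdlib Require Import IndefiniteDescription.
Import GRing.Theory.
Local Open Scope ring_scope.

Section Lin.
Variables (K : fieldType) (V : lmodType K).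
Implicit Types f : V -> V.

Lemma lin0 f : lin_op f -> f 0 = 0.
Proof. move=> H; have := H 1 0 0; rewrite !scale1r addr0.
move=> /(congr1 (fun x => x - f 0)); rewrite subrr addrK => <-. by []. Qed.
Lemma linD f : lin_op f -> forall u v, f (u + v) = f u + f v.
Proof. by move=> H u v; have := H 1 u v; rewrite !scale1r. Qed.
Lemma linZ f : lin_op f -> forall a u, f (a *: u) = a *: f u.
Proof. by move=> H a u; have := H a u 0; rewrite addr0 lin0 // addr0. Qed.
Lemma linN f : lin_op f -> forall u, f (- u) = - f u.
Proof. by move=> H u; rewrite -scaleN1r linZ // scaleN1r. Qed.
Lemma linB f : lin_op f -> forall u v, f (u - v) = f u - f v.
Proof. by move=> H u v; rewrite linD // linN. Qed.
Lemma lin_sum f : lin_op f -> forall (I : Type) (r : seq I) (P : pred I) (F : I -> V),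
  f (\sum_(i <- r | P i) F i) = \sum_(i <- r | P i) f (F i).
Proof. move=> H I r P F; elim/big_rec2: _ => [|i y1 y2 _ <-]; [exact: lin0|exact: linD]. Qed.
Lemma lin_iter f : lin_op f -> forall k, lin_op (iter k f).
Proof. move=> H; elim=> [|k IH] a u v //=. by rewrite IH H. Qed.
End Lin.
Arguments lin0 {K V f}. Arguments linD {K V f}. Arguments linZ {K V f}.
Arguments linN {K V f}. Arguments linB {K V f}. Arguments lin_sum {K V f}. Arguments lin_iter {K V f}.


Section Eig.
Variables (F : closedFieldType) (V : lmodType F) (T : V -> V).
Hypothesis linT : lin_op T.

Definition papp (p : {poly F}) (v : V) : V :=
  \sum_(i < size p) p`_i *: iter i T v.

Lemma pappE (p : {poly F}) v N : (size p <= N)%N -> papp p v = \sum_(i < N) p`_i *: iter i T v.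
Proof.
move=> le; rewrite /papp (big_ord_widen N (fun i => p`_i *: iter i T v)) //.
rewrite [RHS](bigID (fun i : 'I_N => (i < size p)%N)) /=.
rewrite [X in _ = _ + X]big1 ?addr0 //.
by move=> i; rewrite -leqNgt => /(nth_default 0) ->; rewrite scale0r.
Qed.

Lemma papp_lin c (p q : {poly F}) v : papp (c *: p + q) v = c *: papp p v + papp q v.
Proof.
set N := (size p + size q + size (c *: p + q)%R)%N.
rewrite !(@pappE _ _ N) /N; try lia.
rewrite scaler_sumr -big_split /=; apply: eq_bigr => i _.
by rewrite coefD coefZ scalerDl scalerA.
Qed.

Lemma papp_linv (p : {poly F}) c u v : papp p (c *: u + v) = c *: papp p u + papp p v.
Proof.
rewrite /papp scaler_sumr -big_split /=; apply: eq_bigr => i _.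
by rewrite lin_iter // scalerDr !scalerA mulrC.
Qed.

Lemma papp_mulX (q : {poly F}) v : papp (q * 'X) v = papp q (T v).
Proof.
have [->|q0] := eqVneq q 0; first by rewrite mul0r /papp size_poly0 !big_ord0.
rewrite /papp size_mulX // big_ord_recl coefMX eqxx scale0r add0r.
by apply: eq_bigr => i _; rewrite coefMX /= add0n -iterS iterSr.
Qed.

Lemma papp_factor (q : {poly F}) a v : papp (q * ('X - a%:P)) v = papp q (T v - a *: v).
Proof.
rewrite mulrBr [q * a%:P]mulrC mul_polyC.
have -> : q * 'X - a *: q = (- a) *: q + q * 'X by rewrite addrC scaleNr.
rewrite papp_lin papp_mulX addrC -scaleNr (addrC (T v)) papp_linv addrC.
by [].
Qed.

Lemma eig_poly (p : {poly F}) : p != 0 -> forall w, w != 0 -> papp p w = 0 ->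
  exists a v, v != 0 /\ T v = a *: v.
Proof.
move: {2}(size p) (leqnn (size p)) => N; elim: N p => [|N IH] p.
  by rewrite leqn0 size_poly_eq0 => /eqP ->; rewrite eqxx.
move=> lep p0 w w0 pw.
have [s1|s1] := eqVneq (size p) 1.
  move: pw; rewrite /papp s1 big_ord1 /= => /eqP; rewrite scaler_eq0 (negbTE w0) orbF.
  have : lead_coef p != 0 by rewrite lead_coef_eq0.
  by rewrite lead_coefE s1 => /negbTE ->.
have [a ra] := closed_rootP p s1.
have [q pq] := factor_theorem _ _ ra.
have q0 : q != 0 by apply: contraNneq p0 => q0; rewrite pq q0 mul0r.
have [w1|w1] := eqVneq (T w - a *: w) 0.
  by exists a, w; split => //; apply/eqP; rewrite -subr_eq0 w1.
have szq : (size q <= N)%N.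
  move: lep; rewrite pq size_mul ?polyXsubC_eq0 //.
  have sx : size (('X - a%:P) : {poly F}) = 2%N by rewrite size_XsubC.
  by rewrite sx addn2 /= ltnS.
apply: (IH q szq q0 _ w1); by rewrite -papp_factor -pq.
Qed.
End Eig.

Section Eig2.
Variables (F : closedFieldType) (V : lmodType F) (T : V -> V).
Hypothesis linT : lin_op T.

Lemma eig_fin (s : seq V) (P : V -> Prop) :
 (forall v, P v <-> exists c : 'I_(size s) -> F, v = \sum_(j < size s) c j *: s`_j) ->
 (forall v, P v -> P (T v)) -> forall w, P w -> w != 0 ->
 exists a v, v != 0 /\ T v = a *: v.
Proof.
move=> HP PT w Pw w0; set N := size s.
have Pi : forall k, P (iter k T w) by elim=> //= k IH; apply: PT.
have : forall k : 'I_N.+1, exists r : 'rV[F]_N,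
    iter k T w = \sum_(j < N) r 0 j *: s`_j.
  move=> k; have [c ->] := (HP (iter k T w)).1 (Pi k).
  by exists (\row_j c j); apply: eq_bigr => j _; rewrite mxE.
move=> /fin_all_exists [f Hf].
pose M := \matrix_(k < N.+1, j < N) f k 0 j.
have nf : ~~ row_free M.
  rewrite /row_free; apply/negP => /eqP e; have := rank_leq_col M; rewrite e; lia.
pose Km := kermx M.
have [i Hi] : exists i, row i Km != 0.
  case: (pickP (fun i => row i Km != 0)) => [i Hi|H]; first by exists i.
  move: nf; rewrite -kermx_eq0 => /negP; case; apply/eqP/row_matrixP => i.
  by rewrite row0; apply/eqP; move: (H i) => /negbFE.
pose u := row i Km.
have uM : u *m M = 0 by rewrite /u -row_mul mulmx_ker row0.
pose p := \poly_(k < N.+1) u 0 (inord k).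
have p0 : p != 0.
  apply: contraNneq Hi => pe; apply/eqP/rowP => k; rewrite mxE.
  have := coef_poly N.+1 (fun k => u 0 (inord k)) k; rewrite ltn_ord -/p pe coef0 inord_val /u mxE => <-.
  by rewrite mxE.
apply: (@eig_poly _ _ _ linT p p0 w w0).
rewrite (@pappE _ _ T p w N.+1) ?size_poly //.
under eq_bigr => k _ do rewrite coef_poly ltn_ord inord_val Hf scaler_sumr.
rewrite exchange_big /= big1 // => j _.
have := congr1 (fun A : 'M[F]_(1,N) => A 0 j) uM; rewrite !mxE => e.
rewrite -[RHS](scale0r s`_j) -e scaler_suml; apply: eq_bigr => k _.
by rewrite scalerA !mxE.
Qed.
End Eig2.

Section Main.
Variables (R : realType) (g : vectType R[i]) (n : nat) (V : lmodType R[i]).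
Variables (rho : g -> 'rV[int]_n -> V -> V) (kk : 'rV[int]_n -> 'I_n -> V -> V)
  (dd : 'I_n -> V -> V).
Hypothesis linrho : forall x r, lin_op (rho x r).
Hypothesis linkk : forall m i, lin_op (kk m i).
Hypothesis lindd : forall i, lin_op (dd i).
Hypothesis Hirr : tau_irreducible rho kk dd.

Lemma dd_shift (m : 'rV[int]_n) z : central_operator rho kk dd m z ->
  forall i u, dd i (z u) = z (((m ord0 i)%:~R : R[i]) *: u + dd i u).
Proof.
case=> lz _ _ dz i u; have := dz i u; move/eqP; rewrite subr_eq => /eqP ->.
by rewrite lz.
Qed.

Lemma central_bij (m : 'rV[int]_n) z : central_operator rho kk dd m z ->
  (exists v, z v != 0) ->
  (forall u, z u = 0 -> u = 0) /\ (forall y, exists x, z x = y).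
Proof.
move=> Hz [v0 zv0]; have Hz' := Hz; case: Hz' => lz rz kz dz.
have Hsub : forall S : V -> Prop, subspace S ->
    (forall x r v, S v -> S (rho x r v)) ->
    (forall m i v, S v -> S (kk m i v)) ->
    (forall i v, S v -> S (dd i v)) ->
    (forall v, S v -> v = 0) \/ (forall v, S v) by exact: Hirr.2.
split.
  have S1 : subspace (fun v => z v = 0).
    split; first exact: lin0 lz.
    by move=> a u v /= hu hv; rewrite lz hu hv scaler0 addr0.
  have S2 : forall x r v, z v = 0 -> z (rho x r v) = 0.
    by move=> x r v hv; rewrite rz hv (lin0 (linrho _ _)).
  have S3 : forall m' i v, z v = 0 -> z (kk m' i v) = 0.
    by move=> m' i v hv; rewrite kz hv (lin0 (linkk _ _)).
  have S4 : forall i v, z v = 0 -> z (dd i v) = 0.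
    move=> i v hv; have := dz i v; rewrite hv (lin0 (lindd _)) scaler0 sub0r.
    by move/eqP; rewrite oppr_eq0 => /eqP.
  have [H|H] := Hsub _ S1 S2 S3 S4; first exact: H.
  by move: zv0; rewrite H eqxx.
have S1 : subspace (fun y => exists x, y = z x).
  split; first by exists 0; rewrite (lin0 lz).
  by move=> a u v [x ->] [y ->]; exists (a *: x + y); rewrite lz.
have S2 : forall x r v, (exists y, v = z y) -> exists y, rho x r v = z y.
  by move=> x r v [y ->]; exists (rho x r y); rewrite rz.
have S3 : forall m' i v, (exists y, v = z y) -> exists y, kk m' i v = z y.
  by move=> m' i v [y ->]; exists (kk m' i y); rewrite kz.
have S4 : forall i v, (exists y, v = z y) -> exists y, dd i v = z y.
  by move=> i v [y ->]; eexists; rewrite (@dd_shift m z Hz).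
have [H|H] := Hsub _ S1 S2 S3 S4.
- by move: zv0; rewrite (H (z v0)) ?eqxx //; exists v0.
- by move=> y; have [x ->] := H y; exists x.
Qed.

Lemma main_sec (hc : {vspace g}) (m : 'rV[int]_n) z1 z2 :
  weight_module_fin hc rho kk dd ->
  central_operator rho kk dd m z1 -> central_operator rho kk dd m z2 ->
  (exists v, z2 v != 0) -> exists c : R[i], forall v, z1 v = c *: z2 v.
Proof.
move=> [Hdec Hfin] Hz1 Hz2 nz2.
have [inj surj] := @central_bij m z2 Hz2 nz2.
have Hz1' := Hz1; have Hz2' := Hz2.
case: Hz1' => lz1 rz1 kz1 dz1; case: Hz2' => lz2 rz2 kz2 dz2.
have inj2 : forall x y, z2 x = z2 y -> x = y.
  move=> x y e; apply/eqP; rewrite -subr_eq0; apply/eqP/inj.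
  by rewrite (linB lz2) e subrr.
pose T := fun v => proj1_sig (constructive_indefinite_description _ (surj (z1 v))).
have HT : forall v, z2 (T v) = z1 v.
  by move=> v; rewrite /T; case: constructive_indefinite_description.
have linT : lin_op T.
  by move=> a u v; apply: inj2; rewrite lz2 !HT lz1.
have Trho : forall x r v, T (rho x r v) = rho x r (T v).
  by move=> x r v; apply: inj2; rewrite HT rz2 HT rz1.
have Tkk : forall m' i v, T (kk m' i v) = kk m' i (T v).
  by move=> m' i v; apply: inj2; rewrite HT kz2 HT kz1.
have Tdd : forall i v, T (dd i v) = dd i (T v).
  move=> i v; apply: inj2; rewrite HT.
  have := dz1 i v; have := dz2 i (T v); rewrite HT => e2 e1.
  by move: e1; rewrite -e2 => /addrI /oppr_inj.
have [v0 v0nz] := Hirr.1.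
have [s [sE sW]] := Hdec v0.
have [w [ws wnz]] : exists w, w \in s /\ w != 0.
  case: (boolP (has (fun w => w != 0) s)) => [/hasP [w ws wnz]|]; first by exists w.
  move=> /hasPn H; move: v0nz; rewrite sE big1_seq ?eqxx // => w /andP [_ ws].
  by have := H w ws; rewrite negbK => /eqP.
have [mu [a [b Pw]]] := sW w ws.
have [sb Hsb] := Hfin mu a b.
have PT : forall v, weight_space hc rho kk dd mu a b v ->
                    weight_space hc rho kk dd mu a b (T v).
  move=> v [h1 [h2 h3]]; split; [|split].
  - by move=> h hh; rewrite -Trho h1 // (linZ linT).
  - by move=> i; rewrite -Tkk h2 (linZ linT).
  - by move=> i; rewrite -Tdd h3 (linZ linT).
have [c [u [unz Tu]]] := @eig_fin _ _ T linT sb _ Hsb PT w Pw wnz.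
have Hsub : forall S : V -> Prop, subspace S ->
    (forall x r v, S v -> S (rho x r v)) ->
    (forall m i v, S v -> S (kk m i v)) ->
    (forall i v, S v -> S (dd i v)) ->
    (forall v, S v -> v = 0) \/ (forall v, S v) by exact: Hirr.2.
have S1 : subspace (fun v => T v = c *: v).
  split; first by rewrite (lin0 linT) scaler0.
  by move=> a' x y /= hx hy; rewrite linT hx hy scalerDr !scalerA mulrC.
have S2 : forall x r v, T v = c *: v -> T (rho x r v) = c *: rho x r v.
  by move=> x r v hv; rewrite Trho hv (linZ (linrho _ _)).
have S3 : forall m' i v, T v = c *: v -> T (kk m' i v) = c *: kk m' i v.
  by move=> m' i v hv; rewrite Tkk hv (linZ (linkk _ _)).
have S4 : forall i v, T v = c *: v -> T (dd i v) = c *: dd i v.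
  by move=> i v hv; rewrite Tdd hv (linZ (lindd _)).
have [H|H] := Hsub _ S1 S2 S3 S4.
  by move: unz; rewrite (H u Tu) eqxx.
by exists c => v; rewrite -HT H (linZ lz2).
Qed.
End Main.

Theorem lemma4p6 (R : realType) (g : vectType R[i]) (br : g -> g -> g)
  (hc : {vspace g}) (form : g -> g -> R[i]) (n : nat) (V : lmodType R[i])
  (rho : g -> 'rV[int]_n -> V -> V) (kk : 'rV[int]_n -> 'I_n -> V -> V)
  (dd : 'I_n -> V -> V) (m : 'rV[int]_n) (z1 z2 : V -> V) :
  simple_lie br -> cartan_subalgebra br hc -> nondeg_invariant_form br form ->
  (2 <= n)%N ->
  is_tau_module br rho kk dd form ->
  tau_irreducible rho kk dd ->
  weight_module_fin hc rho kk dd ->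
  central_operator rho kk dd m z1 -> central_operator rho kk dd m z2 ->
  (exists v, z1 v != 0) -> (exists v, z2 v != 0) ->
  exists c : R[i], forall v, z1 v = c *: z2 v.
Proof.
move=> _ _ _ _ [[linrho [linkk lindd]] _ _ _ _] Hirr Hwm Hz1 Hz2 _ nz2.
exact: (@main_sec R g n V rho kk dd linrho linkk lindd Hirr hc m z1 z2 Hwm Hz1 Hz2 nz2).
Qed.
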